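(* Let $X$ be a Banach space. If there exists a Banach space $Y\neq\{0\}$ such that the pair $(X,Y)$ has the uniform sBPBp, then $X$ is uniformly convex.
   Context: All Banach spaces are over $\mathbb{K}=\mathbb{R}$ or $\mathbb{C}$. $S_X$ denotes the unit sphere of $X$ and $\mathcal{L}(X,Y)$ the space of bounded linear operators from $X$ to $Y$ with the operator norm. A pair of Banach spaces $(X,Y)$ has the uniform strong Bishop–Phelps–Bollobás property (uniform sBPBp) if for every $\varepsilon>0$ there exists $\eta(\varepsilon)>0$ such that whenever $T\in\mathcal{L}(X,Y)$ with $\|T\|=1$ and $x_0\in S_X$ satisfy $\|T(x_0)\|>1-\eta(\varepsilon)$, there exists $x_1\in S_X$ with $\|T(x_1)\|=1$ and $\|x_1-x_0\|<\varepsilon$. *)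

(* Defs.v *)
From Stdlib Require Import Reals.
Open Scope R_scope.

Record Cplx := mkCplx { Cre : R; Cim : R }.
Definition Cplx_add (a b : Cplx) := mkCplx (Cre a + Cre b) (Cim a + Cim b).
Definition Cplx_mul (a b : Cplx) :=
  mkCplx (Cre a * Cre b - Cim a * Cim b) (Cre a * Cim b + Cim a * Cre b).
Definition Cplx_opp (a : Cplx) := mkCplx (- Cre a) (- Cim a).
Definition Cplx_0 := mkCplx 0 0.
Definition Cplx_1 := mkCplx 1 0.
Definition Cplx_abs (a : Cplx) := sqrt (Cre a * Cre a + Cim a * Cim a).

Inductive Kind := RealK | ComplexK.

Definition K (k : Kind) : Type :=
  match k with RealK => R | ComplexK => Cplx end.

Definition Kadd (k : Kind) : K k -> K k -> K k :=
  match k return K k -> K k -> K k with RealK => Rplus | ComplexK => Cplx_add end.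
Definition Kmul (k : Kind) : K k -> K k -> K k :=
  match k return K k -> K k -> K k with RealK => Rmult | ComplexK => Cplx_mul end.
Definition K1 (k : Kind) : K k :=
  match k return K k with RealK => 1 | ComplexK => Cplx_1 end.
Definition Kabs (k : Kind) : K k -> R :=
  match k return K k -> R with RealK => Rabs | ComplexK => Cplx_abs end.

Record NormedSpace (k : Kind) := {
  carrier :> Type;
  vadd : carrier -> carrier -> carrier;
  vzero : carrier;
  vopp : carrier -> carrier;
  vscale : K k -> carrier -> carrier;
  norm : carrier -> R;
  vadd_assoc : forall x y z, vadd x (vadd y z) = vadd (vadd x y) z;
  vadd_comm : forall x y, vadd x y = vadd y x;
  vadd_0 : forall x, vadd x vzero = x;
  vadd_opp : forall x, vadd x (vopp x) = vzero;
  vscale_1 : forall x, vscale (K1 k) x = x;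
  vscale_assoc : forall a b x, vscale a (vscale b x) = vscale (Kmul k a b) x;
  vscale_addv : forall a x y, vscale a (vadd x y) = vadd (vscale a x) (vscale a y);
  vscale_adds : forall a b x, vscale (Kadd k a b) x = vadd (vscale a x) (vscale b x);
  norm_eq0 : forall x, norm x = 0 <-> x = vzero;
  norm_scale : forall a x, norm (vscale a x) = Kabs k a * norm x;
  norm_triangle : forall x y, norm (vadd x y) <= norm x + norm y
}.

Arguments vadd {k} _ _ _.
Arguments vzero {k} _.
Arguments vopp {k} _ _.
Arguments vscale {k} _ _ _.
Arguments norm {k} _ _.

Definition vsub {k} (X : NormedSpace k) (x y : X) : X := vadd X x (vopp X y).

Definition complete {k} (X : NormedSpace k) : Prop :=
  forall u : nat -> X,
    (forall eps, 0 < eps -> exists N, forall m n, (N <= m)%nat -> (N <= n)%nat ->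
        norm X (vsub X (u m) (u n)) < eps) ->
    exists l : X, forall eps, 0 < eps -> exists N, forall n, (N <= n)%nat ->
        norm X (vsub X (u n) l) < eps.

Record BanachSpace (k : Kind) := {
  bspace :> NormedSpace k;
  bcomplete : complete bspace
}.

Definition is_linear {k} (X Y : NormedSpace k) (T : X -> Y) : Prop :=
  (forall x y, T (vadd X x y) = vadd Y (T x) (T y)) /\
  (forall a x, T (vscale X a x) = vscale Y a (T x)).

Definition is_bounded {k} (X Y : NormedSpace k) (T : X -> Y) : Prop :=
  exists M, forall x, norm Y (T x) <= M * norm X x.

Definition is_bounded_linear {k} (X Y : NormedSpace k) (T : X -> Y) : Prop :=
  is_linear X Y T /\ is_bounded X Y T.

Definition opnorm_eq {k} (X Y : NormedSpace k) (T : X -> Y) (c : R) : Prop :=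
  is_lub (fun r => exists x : X, norm X x <= 1 /\ r = norm Y (T x)) c.

Definition uniform_sBPBp {k} (X Y : NormedSpace k) : Prop :=
  forall eps, 0 < eps -> exists eta, 0 < eta /\
    forall (T : X -> Y) (x0 : X),
      is_bounded_linear X Y T -> opnorm_eq X Y T 1 ->
      norm X x0 = 1 -> norm Y (T x0) > 1 - eta ->
      exists x1 : X, norm X x1 = 1 /\ norm Y (T x1) = 1 /\
                     norm X (vsub X x1 x0) < eps.

Definition uniformly_convex {k} (X : NormedSpace k) : Prop :=
  forall eps, 0 < eps -> exists delta, 0 < delta /\
    forall x y : X, norm X x = 1 -> norm X y = 1 ->
      norm X (vsub X x y) >= eps -> norm X (vadd X x y) / 2 <= 1 - delta.

(* Main.v *)
Require Import Defs.
From Stdlib Require Import Reals Lra Psatz.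
From mathcomp Require boolp classical_sets.
Open Scope R_scope.

Definition toC (k : Kind) : K k -> Cplx :=
  match k return K k -> Cplx with RealK => fun r => mkCplx r 0 | ComplexK => fun z => z end.
Definition KofR (k : Kind) (r : R) : K k :=
  match k return K k with RealK => r | ComplexK => mkCplx r 0 end.

Lemma Cplx_eq (a b : Cplx) : Cre a = Cre b -> Cim a = Cim b -> a = b.
Proof. destruct a, b; simpl; intros; subst; reflexivity. Qed.

Lemma toC_inj k (a b : K k) : toC k a = toC k b -> a = b.
Proof. destruct k; simpl; intro H; [injection H; auto | exact H]. Qed.

Lemma toC_add k a b : toC k (Kadd k a b) = Cplx_add (toC k a) (toC k b).
Proof. destruct k; simpl; apply Cplx_eq; simpl; ring. Qed.

Lemma toC_mul k a b : toC k (Kmul k a b) = Cplx_mul (toC k a) (toC k b).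
Proof. destruct k; simpl; apply Cplx_eq; simpl; ring. Qed.

Lemma toC_KofR k r : toC k (KofR k r) = mkCplx r 0.
Proof. destruct k; reflexivity. Qed.

Lemma toC_K1 k : toC k (K1 k) = mkCplx 1 0.
Proof. destruct k; reflexivity. Qed.

Lemma Kabs_toC k a : Kabs k a = Cplx_abs (toC k a).
Proof.
destruct k; simpl; [|reflexivity]. unfold Cplx_abs; simpl.
replace (a * a + 0 * 0) with (Rsqr a) by (unfold Rsqr; ring).
rewrite sqrt_Rsqr_abs. reflexivity.
Qed.

Definition n2 (x y : R) := sqrt (x * x + y * y).

Lemma Cplx_abs_n2 a : Cplx_abs a = n2 (Cre a) (Cim a).
Proof. reflexivity. Qed.

Lemma n2_ge0 x y : 0 <= n2 x y.
Proof. apply sqrt_pos. Qed.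

Lemma n2_sq x y : n2 x y * n2 x y = x * x + y * y.
Proof. unfold n2. apply sqrt_sqrt. nra. Qed.

Lemma sqrt_le_of_sq X Y : 0 <= Y -> X <= Y * Y -> sqrt X <= Y.
Proof.
intros HY H. rewrite <- (sqrt_square Y HY). apply sqrt_le_1_alt. exact H.
Qed.

Lemma n2_le x y s : 0 <= s -> x * x + y * y <= s * s -> n2 x y <= s.
Proof. intros. apply sqrt_le_of_sq; auto. Qed.

Lemma ge_of_sq a b : 0 <= b -> a * a <= b * b -> a <= b.
Proof. intros Hb H. destruct (Rle_or_lt a b) as [|Hl]; auto. nra. Qed.

Lemma n2_CS x1 y1 x2 y2 : x1 * x2 + y1 * y2 <= n2 x1 y1 * n2 x2 y2.
Proof.
pose proof (n2_sq x1 y1). pose proof (n2_sq x2 y2).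
pose proof (n2_ge0 x1 y1). pose proof (n2_ge0 x2 y2).
apply ge_of_sq. apply Rmult_le_pos; auto.
replace (n2 x1 y1 * n2 x2 y2 * (n2 x1 y1 * n2 x2 y2)) with
  ((n2 x1 y1 * n2 x1 y1) * (n2 x2 y2 * n2 x2 y2)) by ring.
rewrite H, H0. pose proof (Rle_0_sqr (x1*y2 - y1*x2)). unfold Rsqr in *. nra.
Qed.

Lemma n2_tri x1 y1 x2 y2 : n2 (x1 + x2) (y1 + y2) <= n2 x1 y1 + n2 x2 y2.
Proof.
pose proof (n2_CS x1 y1 x2 y2).
pose proof (n2_sq x1 y1). pose proof (n2_sq x2 y2).
pose proof (n2_ge0 x1 y1). pose proof (n2_ge0 x2 y2).
apply n2_le. lra. nra.
Qed.

Lemma n2_re x y : x <= n2 x y.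
Proof.
pose proof (n2_sq x y). pose proof (n2_ge0 x y).
apply ge_of_sq; auto. nra.
Qed.

Lemma n2_absre x y : Rabs x <= n2 x y.
Proof.
pose proof (n2_sq x y). pose proof (n2_ge0 x y).
apply ge_of_sq; auto. rewrite <- Rabs_mult, Rabs_right by nra. nra.
Qed.

Lemma n2_mul x1 y1 x2 y2 :
  n2 (x1 * x2 - y1 * y2) (x1 * y2 + y1 * x2) = n2 x1 y1 * n2 x2 y2.
Proof.
unfold n2. rewrite <- sqrt_mult by nra. f_equal. ring.
Qed.

Lemma n2_opp x y : n2 (- x) (- y) = n2 x y.
Proof. unfold n2. f_equal. ring. Qed.

Lemma n2_real x : n2 x 0 = Rabs x.
Proof. unfold n2. replace (x*x+0*0) with (Rsqr x) by (unfold Rsqr; ring). apply sqrt_Rsqr_abs. Qed.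

Lemma Kmul_comm k a b : Kmul k a b = Kmul k b a.
Proof. apply toC_inj. rewrite !toC_mul. apply Cplx_eq; simpl; ring. Qed.
Lemma Kmul_assoc k a b c : Kmul k a (Kmul k b c) = Kmul k (Kmul k a b) c.
Proof. apply toC_inj. rewrite !toC_mul. apply Cplx_eq; simpl; ring. Qed.
Lemma Kmul_addr k a b c : Kmul k a (Kadd k b c) = Kadd k (Kmul k a b) (Kmul k a c).
Proof. apply toC_inj. rewrite toC_mul, !toC_add, !toC_mul. apply Cplx_eq; simpl; ring. Qed.
Lemma Kadd_comm k a b : Kadd k a b = Kadd k b a.
Proof. apply toC_inj. rewrite !toC_add. apply Cplx_eq; simpl; ring. Qed.
Lemma Kadd_assoc k a b c : Kadd k a (Kadd k b c) = Kadd k (Kadd k a b) c.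
Proof. apply toC_inj. rewrite !toC_add. apply Cplx_eq; simpl; ring. Qed.
Lemma KofR_add k r s : Kadd k (KofR k r) (KofR k s) = KofR k (r + s).
Proof. apply toC_inj. rewrite toC_add, !toC_KofR. apply Cplx_eq; simpl; ring. Qed.
Lemma KofR_mul k r s : Kmul k (KofR k r) (KofR k s) = KofR k (r * s).
Proof. apply toC_inj. rewrite toC_mul, !toC_KofR. apply Cplx_eq; simpl; ring. Qed.
Lemma KofR_1 k : KofR k 1 = K1 k.
Proof. apply toC_inj. rewrite toC_KofR, toC_K1. reflexivity. Qed.
Lemma Kabs_KofR k r : Kabs k (KofR k r) = Rabs r.
Proof. rewrite Kabs_toC, toC_KofR, Cplx_abs_n2. apply n2_real. Qed.
Lemma Kabs_mul k a b : Kabs k (Kmul k a b) = Kabs k a * Kabs k b.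
Proof. rewrite !Kabs_toC, toC_mul. unfold Cplx_mul. rewrite !Cplx_abs_n2. simpl. apply n2_mul. Qed.

Arguments vadd_assoc {k} _ _ _ _.
Arguments vadd_comm {k} _ _ _.
Arguments vadd_0 {k} _ _.
Arguments vadd_opp {k} _ _.
Arguments vscale_1 {k} _ _.
Arguments vscale_assoc {k} _ _ _ _.
Arguments vscale_addv {k} _ _ _ _.
Arguments vscale_adds {k} _ _ _ _.
Arguments norm_eq0 {k} _ _.
Arguments norm_scale {k} _ _ _.
Arguments norm_triangle {k} _ _ _.

Definition rs {k} (X : NormedSpace k) (r : R) (v : X) : X := vscale X (KofR k r) v.

Lemma vadd_0l {k} (X : NormedSpace k) (x : X) : vadd X (vzero X) x = x.
Proof. rewrite vadd_comm. apply vadd_0. Qed.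

Lemma vcancel {k} (X : NormedSpace k) (x y z : X) : vadd X x y = vadd X x z -> y = z.
Proof.
intro H. assert (E : vadd X (vopp X x) (vadd X x y) = vadd X (vopp X x) (vadd X x z)) by (rewrite H; reflexivity).
rewrite !vadd_assoc in E. rewrite (vadd_comm X (vopp X x) x), vadd_opp, !vadd_0l in E. exact E.
Qed.

Lemma rs_adds {k} (X : NormedSpace k) a b (v : X) : vadd X (rs X a v) (rs X b v) = rs X (a + b) v.
Proof. unfold rs. rewrite <- vscale_adds, KofR_add. reflexivity. Qed.

Lemma rs_addv {k} (X : NormedSpace k) a (u v : X) : rs X a (vadd X u v) = vadd X (rs X a u) (rs X a v).
Proof. unfold rs. apply vscale_addv. Qed.

Lemma rs_rs {k} (X : NormedSpace k) a b (v : X) : rs X a (rs X b v) = rs X (a * b) v.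
Proof. unfold rs. rewrite vscale_assoc, KofR_mul. reflexivity. Qed.

Lemma rs_1 {k} (X : NormedSpace k) (v : X) : rs X 1 v = v.
Proof. unfold rs. rewrite KofR_1. apply vscale_1. Qed.

Lemma rs_0 {k} (X : NormedSpace k) (v : X) : rs X 0 v = vzero X.
Proof.
assert (H : vadd X (rs X 0 v) (rs X 0 v) = vadd X (rs X 0 v) (vzero X)).
{ rewrite rs_adds, vadd_0. f_equal. ring. }
exact (vcancel X _ _ _ H).
Qed.

Lemma rs_zero {k} (X : NormedSpace k) a : rs X a (vzero X) = vzero X.
Proof.
assert (H : vadd X (rs X a (vzero X)) (rs X a (vzero X)) = vadd X (rs X a (vzero X)) (vzero X)).
{ rewrite <- rs_addv, !vadd_0. reflexivity. }
exact (vcancel X _ _ _ H).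
Qed.

Lemma vopp_rs {k} (X : NormedSpace k) (v : X) : vopp X v = rs X (-1) v.
Proof.
apply (vcancel X v). rewrite vadd_opp. rewrite <- (rs_1 X v) at 1.
rewrite rs_adds. replace (1 + -1) with 0 by ring. rewrite rs_0. reflexivity.
Qed.

Lemma norm_rs {k} (X : NormedSpace k) a (v : X) : norm X (rs X a v) = Rabs a * norm X v.
Proof. unfold rs. rewrite norm_scale, Kabs_KofR. reflexivity. Qed.

Lemma norm_zero {k} (X : NormedSpace k) : norm X (vzero X) = 0.
Proof. apply norm_eq0. reflexivity. Qed.

Lemma norm_opp {k} (X : NormedSpace k) (v : X) : norm X (vopp X v) = norm X v.
Proof. rewrite vopp_rs, norm_rs. replace (Rabs (-1)) with 1 by (rewrite Rabs_left; lra). ring. Qed.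

Lemma norm_ge0 {k} (X : NormedSpace k) (v : X) : 0 <= norm X v.
Proof.
pose proof (norm_triangle X v (vopp X v)). rewrite vadd_opp, norm_zero, norm_opp in H. lra.
Qed.

Lemma vswap {k} (X : NormedSpace k) (p q r s : X) :
  vadd X (vadd X p q) (vadd X r s) = vadd X (vadd X p r) (vadd X q s).
Proof.
rewrite !vadd_assoc. f_equal. rewrite <- !vadd_assoc. f_equal. apply vadd_comm.
Qed.

Lemma vcancel_r {k} (X : NormedSpace k) (x y z : X) : vadd X y x = vadd X z x -> y = z.
Proof. rewrite (vadd_comm X y), (vadd_comm X z). apply vcancel. Qed.

Lemma vsub_rs {k} (X : NormedSpace k) (u v : X) : vsub X u v = vadd X u (rs X (-1) v).
Proof. unfold vsub. rewrite vopp_rs. reflexivity. Qed.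

Lemma norm_sub_sym {k} (X : NormedSpace k) (u v : X) : norm X (vsub X u v) = norm X (vsub X v u).
Proof.
rewrite <- norm_opp. f_equal. unfold vsub. apply (vcancel X (vadd X u (vopp X v))).
rewrite vadd_opp, vswap, (vadd_comm X u v), vswap, !vadd_opp, vadd_0. reflexivity.
Qed.

Definition Good {k} (X : NormedSpace k) (z : X) (G : X * R -> Prop) : Prop :=
  (forall u r v s, G (u, r) -> G (v, s) -> G (vadd X u v, r + s)) /\
  (forall a u r, G (u, r) -> G (rs X a u, a * r)) /\
  (forall u r s, G (u, r) -> G (u, s) -> r = s) /\
  (forall u r, G (u, r) -> r <= norm X u) /\
  (forall a, G (rs X a z, a * norm X z)).

Lemma vadd_rs0 {k} (X : NormedSpace k) (u x : X) : vadd X u (rs X 0 x) = u.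
Proof. rewrite rs_0. apply vadd_0. Qed.

Lemma decomp1 {k} (X : NormedSpace k) (u x : X) : u = vadd X (vadd X u (rs X (-1) x)) x.
Proof.
rewrite <- vadd_assoc. rewrite <- (rs_1 X x) at 2. rewrite rs_adds.
replace (-1 + 1) with 0 by ring. rewrite vadd_rs0. reflexivity.
Qed.

Lemma decomp2 {k} (X : NormedSpace k) (u v x : X) :
  vadd X u v = vadd X (vadd X u (rs X (-1) x)) (vadd X v x).
Proof.
rewrite vswap. rewrite <- (rs_1 X x) at 2. rewrite rs_adds.
replace (-1 + 1) with 0 by ring. rewrite vadd_rs0. reflexivity.
Qed.

Lemma G00 {k} (X : NormedSpace k) z G : Good X z G -> G (vzero X, 0).
Proof.
intros (_&_&_&_&Hb). specialize (Hb 0). rewrite rs_0, Rmult_0_l in Hb. exact Hb.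
Qed.

Lemma ext_step {k} (X : NormedSpace k) (z x1 : X) (G : X * R -> Prop) :
  Good X z G -> (~ exists r, G (x1, r)) ->
  exists G', Good X z G' /\ (forall q, G q -> G' q) /\ exists c, G' (x1, c).
Proof.
intros HG Hx1.
pose proof (G00 X z G HG) as H00.
destruct HG as (Hadd & Hsc & Hfun & Hdom & Hbase).
set (E := fun q => exists u r, G (u, r) /\ q = r - norm X (vadd X u (rs X (-1) x1))).
assert (HEb : bound E).
{ exists (norm X x1). intros q (u & r & Hur & ->).
  pose proof (Hdom _ _ Hur). pose proof (norm_triangle X (vadd X u (rs X (-1) x1)) x1).
  rewrite <- decomp1 in H0. lra. }
assert (HEn : exists q, E q).
{ exists (0 - norm X (vadd X (vzero X) (rs X (-1) x1))). exists (vzero X), 0. auto. }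
destruct (completeness E HEb HEn) as [c [Hc1 Hc2]].
assert (Hlow : forall u r, G (u, r) -> r - norm X (vadd X u (rs X (-1) x1)) <= c).
{ intros u r H. apply Hc1. exists u, r. auto. }
assert (Hup : forall v s, G (v, s) -> c <= norm X (vadd X v x1) - s).
{ intros v s H. apply Hc2. intros q (u & r & Hur & ->).
  pose proof (Hadd _ _ _ _ Hur H) as Huv. pose proof (Hdom _ _ Huv).
  rewrite (decomp2 X u v x1) in H0.
  pose proof (norm_triangle X (vadd X u (rs X (-1) x1)) (vadd X v x1)). lra. }
exists (fun q => exists u r a, G (u, r) /\ q = (vadd X u (rs X a x1), r + a * c)).
split; [|split].
- split; [|split; [|split; [|split]]].
  + intros u r v s (u1 & r1 & a1 & H1 & E1) (u2 & r2 & a2 & H2 & E2).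
    injection E1 as -> ->. injection E2 as -> ->.
    exists (vadd X u1 u2), (r1 + r2), (a1 + a2). split; [apply Hadd; auto|].
    rewrite vswap, rs_adds. f_equal. ring.
  + intros a u r (u1 & r1 & a1 & H1 & E1). injection E1 as -> ->.
    exists (rs X a u1), (a * r1), (a * a1). split; [apply Hsc; auto|].
    rewrite rs_addv, rs_rs. f_equal. ring.
  + intros u r s (u1 & r1 & a1 & H1 & E1) (u2 & r2 & a2 & H2 & E2).
    injection E1 as Eu1 ->. injection E2 as Eu2 ->. rewrite Eu1 in Eu2.
    destruct (Req_dec a1 a2) as [Ha|Ha].
    * subst a2. assert (u1 = u2) by exact (vcancel_r X _ _ _ Eu2). subst u2.
      rewrite (Hfun _ _ _ H1 H2). reflexivity.
    * exfalso. apply Hx1.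
      assert (Hm : G (vadd X u2 (rs X (-1) u1), r2 + -1 * r1)) by (apply Hadd; auto).
      exists ((/ (a1 - a2)) * (r2 + -1 * r1)).
      replace x1 with (rs X (/ (a1 - a2)) (vadd X u2 (rs X (-1) u1))); [apply Hsc; auto|].
      assert (Heq : vadd X (vadd X u1 (rs X a1 x1)) (vadd X (rs X (-1) u1) (rs X (- a2) x1))
                  = vadd X (vadd X u2 (rs X a2 x1)) (vadd X (rs X (-1) u1) (rs X (- a2) x1)))
        by (rewrite Eu2; reflexivity).
      rewrite vswap, (vswap X u2) in Heq.
      rewrite <- (rs_1 X u1) in Heq at 1. rewrite !rs_adds in Heq.
      replace (1 + -1) with 0 in Heq by ring. replace (a2 + - a2) with 0 in Heq by ring.
      rewrite rs_0, vadd_0l, vadd_rs0 in Heq. rewrite <- Heq, rs_rs.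
      replace (/ (a1 - a2) * (a1 + - a2)) with 1 by (field; lra). apply rs_1.
  + intros u r (u1 & r1 & a1 & H1 & E1). injection E1 as -> ->.
    destruct (Rlt_or_le 0 a1) as [Hp|Hn].
    * pose proof (Hup _ _ (Hsc (/ a1) _ _ H1)) as Hu.
      assert (Hv : vadd X u1 (rs X a1 x1) = rs X a1 (vadd X (rs X (/ a1) u1) x1)).
      { rewrite rs_addv, rs_rs. replace (a1 * / a1) with 1 by (field; lra). rewrite rs_1. reflexivity. }
      rewrite Hv, norm_rs, Rabs_right by lra.
      apply (Rmult_le_compat_l a1) in Hu; [|lra].
      rewrite Rmult_minus_distr_l in Hu.
      replace (a1 * (/ a1 * r1)) with r1 in Hu by (field; lra). lra.
    * destruct (Req_dec a1 0) as [H0|H0].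
      { subst a1. rewrite vadd_rs0. pose proof (Hdom _ _ H1). lra. }
      set (b := - a1).
      pose proof (Hlow _ _ (Hsc (/ b) _ _ H1)) as Hu.
      assert (Hv : vadd X u1 (rs X a1 x1) = rs X b (vadd X (rs X (/ b) u1) (rs X (-1) x1))).
      { rewrite rs_addv, !rs_rs. replace (b * / b) with 1 by (unfold b; field; lra). rewrite rs_1.
        f_equal. f_equal. unfold b. ring. }
      rewrite Hv, norm_rs, Rabs_right by (unfold b; lra).
      apply (Rmult_le_compat_l b) in Hu; [|unfold b; lra].
      replace (b * (/ b * r1 - norm X (vadd X (rs X (/ b) u1) (rs X (-1) x1)))) with
        (r1 - b * norm X (vadd X (rs X (/ b) u1) (rs X (-1) x1))) in Hu by (unfold b; field; lra).
      unfold b in *. lra.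
  + intros a. exists (rs X a z), (a * norm X z), 0. split; [apply Hbase|].
    rewrite vadd_rs0. f_equal. ring.
- intros [u r] H. exists u, r, 0. split; auto. rewrite vadd_rs0. f_equal. ring.
- exists c. exists (vzero X), 0, 1. split; auto. rewrite vadd_0l, rs_1. f_equal. ring.
Qed.

Lemma zorn_prop (T : Type) (t0 : T) (R : T -> T -> Prop) :
  (forall t, R t t) -> (forall r s t, R r s -> R s t -> R r t) ->
  (forall A : T -> Prop, (forall s t, A s -> A t -> R s t \/ R t s) ->
     exists t, forall s, A s -> R s t) ->
  exists t, forall s, R t s -> R s t.
Proof.
intros Hr Ht Hc.
destruct (@classical_sets.ZL_preorder T t0 (fun s t => boolp.asbool (R s t))) as [m Hm].
- intros t. apply boolp.asboolT. apply Hr.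
- intros r s t H1 H2. apply boolp.asboolT.
  apply (Ht r s t); apply boolp.asboolW; assumption.
- intros A HA. destruct (Hc A) as [m Hm].
  + intros s t As At. destruct (HA s t As At) as [H|H]; [left|right]; apply boolp.asboolW; exact H.
  + exists m. intros s As. apply boolp.asboolT. apply Hm, As.
- exists m. intros s H. apply boolp.asboolW. apply Hm. apply boolp.asboolT. exact H.
Qed.

Definition Bgr {k} (X : NormedSpace k) (z : X) (q : X * R) : Prop :=
  exists a, q = (rs X a z, a * norm X z).

Lemma Bgr_good {k} (X : NormedSpace k) z : Good X z (Bgr X z).
Proof.
split; [|split; [|split; [|split]]].
- intros u r v s [a Ea] [b Eb]. injection Ea as -> ->. injection Eb as -> ->.
  exists (a + b). rewrite rs_adds. f_equal. ring.
- intros s u r [a Ea]. injection Ea as -> ->. exists (s * a). rewrite rs_rs. f_equal. ring.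
- intros u r s [a Ea] [b Eb]. injection Ea as -> ->. injection Eb as Eu ->.
  assert (H : rs X (a + - b) z = vzero X).
  { rewrite <- rs_adds, Eu, rs_adds. replace (b + - b) with 0 by ring. apply rs_0. }
  assert (H2 : norm X (rs X (a + - b) z) = 0) by (rewrite H; apply norm_zero).
  rewrite norm_rs in H2. destruct (Rmult_integral _ _ H2) as [H3|H3].
  + assert (a = b). { destruct (Rcase_abs (a + - b)); [rewrite Rabs_left in H3|rewrite Rabs_right in H3]; lra. }
    subst; reflexivity.
  + rewrite H3. ring.
- intros u r [a Ea]. injection Ea as -> ->. rewrite norm_rs.
  apply Rmult_le_compat_r; [apply norm_ge0|apply Rle_abs].
- intros a. exists a. reflexivity.
Qed.

Lemma Good_base {k} (X : NormedSpace k) z G : Good X z G -> forall q, Bgr X z q -> G q.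
Proof. intros (_&_&_&_&Hb) q [a ->]. apply Hb. Qed.

Lemma real_HB {k} (X : NormedSpace k) (z : X) : exists psi : X -> R,
  (forall u v, psi (vadd X u v) = psi u + psi v) /\
  (forall a u, psi (rs X a u) = a * psi u) /\
  (forall u, psi u <= norm X u) /\ psi z = norm X z.
Proof.
set (T := {G : X * R -> Prop | Good X z G}).
set (Rl := fun (s t : T) => forall q, proj1_sig s q -> proj1_sig t q).
destruct (zorn_prop T (exist _ (Bgr X z) (Bgr_good X z)) Rl) as [[M HM] Hmax].
- intros t q H. exact H.
- intros r s t H1 H2 q H. apply H2, H1, H.
- intros A HA.
  set (U := fun q => Bgr X z q \/ exists s : T, A s /\ proj1_sig s q).
  assert (Hone : forall q, U q -> exists G, Good X z G /\ G q /\ forall q', G q' -> U q').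
  { intros q [Hq|[[s Hs] [As Hq]]].
    - exists (Bgr X z). split; [apply Bgr_good|]. split; auto. intros q' H; left; auto.
    - exists s. split; auto. split; auto. intros q' H. right. exists (exist _ s Hs). auto. }
  assert (Htwo : forall q1 q2, U q1 -> U q2 -> exists G, Good X z G /\ G q1 /\ G q2 /\ forall q', G q' -> U q').
  { intros q1 q2 [H1|[[s1 Hs1] [As1 H1]]] [H2|[[s2 Hs2] [As2 H2]]].
    - exists (Bgr X z). split; [apply Bgr_good|]. split; [auto|split; [auto|]]. intros q' H; left; auto.
    - exists s2. split; [auto|split; [|split; [auto|]]]. apply (Good_base X z s2 Hs2); auto.
      intros q' H. right. exists (exist _ s2 Hs2). auto.
    - exists s1. split; [auto|split; [auto|split; [|]]]. apply (Good_base X z s1 Hs1); auto.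
      intros q' H. right. exists (exist _ s1 Hs1). auto.
    - destruct (HA _ _ As1 As2) as [Hl|Hl].
      + exists s2. split; [auto|split; [|split; [auto|]]]. apply Hl; auto.
        intros q' H. right. exists (exist _ s2 Hs2). auto.
      + exists s1. split; [auto|split; [auto|split; [|]]]. apply Hl; auto.
        intros q' H. right. exists (exist _ s1 Hs1). auto. }
  assert (HU : Good X z U).
  { split; [|split; [|split; [|split]]].
    - intros u r v s H1 H2. destruct (Htwo _ _ H1 H2) as (G & (Ha&_) & G1 & G2 & GU). auto.
    - intros a u r H1. destruct (Hone _ H1) as (G & (_&Ha&_) & G1 & GU). auto.
    - intros u r s H1 H2. destruct (Htwo _ _ H1 H2) as (G & (_&_&Hf&_) & G1 & G2 & GU). eauto.
    - intros u r H1. destruct (Hone _ H1) as (G & (_&_&_&Hd&_) & G1 & GU). auto.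
    - intros a. left. exists a. reflexivity. }
  exists (exist _ U HU). intros s As q Hq. right. exists s. auto.
- simpl in *.
  assert (Htot : forall x, exists r, M (x, r)).
  { intros x. apply Classical_Prop.NNPP. intro Hn.
    destruct (ext_step X z x M HM Hn) as (G' & HG' & Hsub & c & Hc).
    assert (H := Hmax (exist _ G' HG') Hsub). simpl in H.
    apply Hn. exists c. apply H, Hc. }
  destruct HM as (Hadd & Hsc & Hfun & Hdom & Hbase).
  set (psi := fun x => proj1_sig (boolp.constructive_indefinite_description (Htot x))).
  assert (Hpsi : forall x, M (x, psi x)).
  { intros x. unfold psi. destruct (boolp.constructive_indefinite_description (Htot x)). exact m. }
  exists psi. split; [|split; [|split]].
  + intros u v. apply (Hfun (vadd X u v)); auto.
  + intros a u. apply (Hfun (rs X a u)); auto.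
  + intros u. apply Hdom, Hpsi.
  + apply (Hfun z); auto. pose proof (Hbase 1) as Hb1. rewrite rs_1, Rmult_1_l in Hb1. exact Hb1.
Qed.

Lemma cplx_decomp (X : NormedSpace ComplexK) (al be : R) (u : X) :
  vscale X (mkCplx al be) u = vadd X (rs X al u) (rs X be (vscale X (mkCplx 0 1) u)).
Proof.
unfold rs. rewrite vscale_assoc, <- vscale_adds. f_equal.
apply Cplx_eq; simpl; ring.
Qed.

Lemma K_HB {k} (X : NormedSpace k) (z : X) : exists phi : X -> K k,
  (forall u v, phi (vadd X u v) = Kadd k (phi u) (phi v)) /\
  (forall a u, phi (vscale X a u) = Kmul k a (phi u)) /\
  (forall u, Kabs k (phi u) <= norm X u) /\ Cre (toC k (phi z)) = norm X z.
Proof.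
destruct (real_HB X z) as (psi & Hadd & Hsc & Hdom & Hz).
destruct k.
- exists psi. split; [|split; [|split]].
  + exact Hadd.
  + intros a u. exact (Hsc a u).
  + intros u. simpl. apply Rabs_le. split.
    * pose proof (Hdom (rs X (-1) u)). rewrite Hsc, norm_rs in H.
      replace (Rabs (-1)) with 1 in H by (rewrite Rabs_left; lra). lra.
    * apply Hdom.
  + exact Hz.
- set (i := mkCplx 0 1).
  assert (Hd : forall al be u, psi (vscale X (mkCplx al be) u) = al * psi u + be * psi (vscale X i u)).
  { intros al be u. rewrite cplx_decomp, Hadd, !Hsc. reflexivity. }
  exists (fun u => mkCplx (psi u) (- psi (vscale X i u))). split; [|split; [|split]].
  + intros u v. simpl. unfold Cplx_add. simpl. rewrite vscale_addv, !Hadd. f_equal. ring.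
  + intros [al be] u. apply Cplx_eq; simpl.
    * rewrite Hd. ring.
    * rewrite vscale_assoc. simpl. unfold i, Cplx_mul. simpl.
      rewrite (Hd (0 * al - 1 * be) (0 * be + 1 * al)). fold i. ring.
  + intros u. simpl. rewrite Cplx_abs_n2. simpl.
    set (p := psi u). set (q := psi (vscale X i u)).
    set (m := n2 p (- q)).
    assert (Hm0 : 0 <= m) by apply n2_ge0.
    destruct (Req_dec m 0) as [Hm|Hm].
    * rewrite Hm. apply norm_ge0.
    * assert (Hmsq : m * m = p * p + q * q) by (unfold m; rewrite n2_sq; ring).
      pose proof (Hdom (vscale X (mkCplx (p / m) (q / m)) u)) as H.
      rewrite Hd, norm_scale in H. fold p q in H.
      assert (Habs : Kabs ComplexK (mkCplx (p / m) (q / m)) = 1).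
      { simpl. rewrite Cplx_abs_n2. simpl. apply Rle_antisym.
        - apply n2_le; [lra|]. replace (p / m * (p / m) + q / m * (q / m)) with ((p*p+q*q)/(m*m)) by (field; auto).
          rewrite <- Hmsq. right. field. auto.
        - apply ge_of_sq; [apply n2_ge0|]. rewrite n2_sq.
          replace (p / m * (p / m) + q / m * (q / m)) with ((p*p+q*q)/(m*m)) by (field; auto).
          rewrite <- Hmsq. right. field. auto. }
      rewrite Habs in H.
      replace (p / m * p + q / m * q) with m in H. lra.
      replace (p / m * p + q / m * q) with ((p*p+q*q)/m) by (field; auto). rewrite <- Hmsq. field. auto.
  + simpl. exact Hz.
Qed.

Lemma key_scalar (a1 b1 a2 b2 g1 g2 h1 h2 c t d s eta : R) :
  0 < c -> 0 < t -> 0 <= s ->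
  n2 a1 b1 <= 1 -> n2 a2 b2 <= 1 ->
  n2 (a1 + t * a2) (b1 + t * b2) = c ->
  n2 (a1 + t * a2 - g1) (b1 + t * b2 - g2) <= c * d ->
  n2 g1 g2 <= c -> c * (1 - eta) <= g1 -> 2 * eta <= s * s ->
  n2 (a2 - h1) (b2 - h2) <= d ->
  c - 1 <= t * (h1 + 2 * d + s).
Proof.
intros Hc Ht Hs Hf Hh Hgw Hgwy Hgy Hg1 Heta Hhd.
set (p := a1 + t * a2) in *. set (q := b1 + t * b2) in *.
assert (Hpq : p * p + q * q = c * c) by (rewrite <- n2_sq, Hgw; ring).
assert (H1 : p * a1 + q * b1 <= c).
{ pose proof (n2_CS p q a1 b1). rewrite Hgw in H. pose proof (n2_ge0 a1 b1). nra. }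
set (A := p * a2 + q * b2).
assert (H2 : c * c - c <= t * A).
{ assert (p * p + q * q = (p * a1 + q * b1) + t * A) by (unfold A, p, q; ring). lra. }
assert (Hgsq : g1 * g1 + g2 * g2 <= c * c).
{ rewrite <- n2_sq. pose proof (n2_ge0 g1 g2). nra. }
assert (H3 : n2 (g1 - c) g2 <= c * s).
{ apply n2_le. nra. nra. }
assert (H4 : n2 (p - c) q <= c * d + c * s).
{ pose proof (n2_tri (p - g1) (q - g2) (g1 - c) g2).
  replace (p - g1 + (g1 - c)) with (p - c) in H by ring.
  replace (q - g2 + g2) with q in H by ring. lra. }
assert (H5 : (p - c) * a2 + q * b2 <= c * d + c * s).
{ pose proof (n2_CS (p - c) q a2 b2). pose proof (n2_ge0 (p - c) q). pose proof (n2_ge0 a2 b2). nra. }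
assert (H6 : a2 - h1 <= d).
{ pose proof (n2_re (a2 - h1) (b2 - h2)). lra. }
assert (H7 : A <= c * (h1 + 2 * d + s)).
{ assert (A = (p - c) * a2 + q * b2 + c * (a2 - h1) + c * h1) by (unfold A; ring). nra. }
assert (H8 : c * (c - 1) <= c * (t * (h1 + 2 * d + s))) by nra.
apply Rmult_le_reg_l in H8; auto.
Qed.

Lemma Cre_add k a b : Cre (toC k (Kadd k a b)) = Cre (toC k a) + Cre (toC k b).
Proof. rewrite toC_add. reflexivity. Qed.
Lemma Cim_add k a b : Cim (toC k (Kadd k a b)) = Cim (toC k a) + Cim (toC k b).
Proof. rewrite toC_add. reflexivity. Qed.
Lemma Cre_mulR k r a : Cre (toC k (Kmul k (KofR k r) a)) = r * Cre (toC k a).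
Proof. rewrite toC_mul, toC_KofR. simpl. ring. Qed.
Lemma Cim_mulR k r a : Cim (toC k (Kmul k (KofR k r) a)) = r * Cim (toC k a).
Proof. rewrite toC_mul, toC_KofR. simpl. ring. Qed.
Lemma Kabs_n2 k a : Kabs k a = n2 (Cre (toC k a)) (Cim (toC k a)).
Proof. rewrite Kabs_toC. reflexivity. Qed.
Lemma Kabs_tri k a b : Kabs k (Kadd k a b) <= Kabs k a + Kabs k b.
Proof. rewrite !Kabs_n2, Cre_add, Cim_add. apply n2_tri. Qed.
Lemma Kre_le_abs k a : Cre (toC k a) <= Kabs k a.
Proof. rewrite Kabs_n2. apply n2_re. Qed.
Lemma Kabs_ge0 k a : 0 <= Kabs k a.
Proof. rewrite Kabs_n2. apply n2_ge0. Qed.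

Definition Klin {k} (X : NormedSpace k) (phi : X -> K k) :=
  (forall u v, phi (vadd X u v) = Kadd k (phi u) (phi v)) /\
  (forall a u, phi (vscale X a u) = Kmul k a (phi u)).

Lemma Klin_sub_re {k} (X : NormedSpace k) phi u v : Klin X phi ->
  Cre (toC k (phi (vsub X u v))) = Cre (toC k (phi u)) - Cre (toC k (phi v)).
Proof.
intros [Ha Hs]. rewrite vsub_rs. unfold rs. rewrite Ha, Hs, Cre_add, Cre_mulR. ring.
Qed.
Lemma Klin_sub_im {k} (X : NormedSpace k) phi u v : Klin X phi ->
  Cim (toC k (phi (vsub X u v))) = Cim (toC k (phi u)) - Cim (toC k (phi v)).
Proof.
intros [Ha Hs]. rewrite vsub_rs. unfold rs. rewrite Ha, Hs, Cim_add, Cim_mulR. ring.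
Qed.
Lemma Klin_add_re {k} (X : NormedSpace k) phi u v : Klin X phi ->
  Cre (toC k (phi (vadd X u v))) = Cre (toC k (phi u)) + Cre (toC k (phi v)).
Proof. intros [Ha Hs]. rewrite Ha, Cre_add. reflexivity. Qed.

Lemma Klin_comb {k} (X : NormedSpace k) f h t : Klin X f -> Klin X h ->
  Klin X (fun u => Kadd k (f u) (Kmul k (KofR k t) (h u))).
Proof.
intros [fa fs] [ha hs]. split.
- intros u v. rewrite fa, ha. apply toC_inj.
  rewrite !toC_add, !toC_mul, !toC_add. apply Cplx_eq; simpl; ring.
- intros a u. rewrite fs, hs. apply toC_inj.
  rewrite !toC_add, !toC_mul, !toC_add, !toC_mul. apply Cplx_eq; simpl; ring.
Qed.

Lemma Klin_rs {k} (X : NormedSpace k) g a u : Klin X g -> Kabs k (g (rs X a u)) = Rabs a * Kabs k (g u).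
Proof. intros [_ Hs]. unfold rs. rewrite Hs, Kabs_mul, Kabs_KofR. reflexivity. Qed.

Lemma bound_all {k} (X : NormedSpace k) g c : Klin X g -> 0 < c ->
  (forall u, norm X u <= 1 -> Kabs k (g u) <= c) -> forall u, Kabs k (g u) <= c * norm X u.
Proof.
intros Hg Hc Hb u.
pose proof (norm_ge0 X u) as Hn.
destruct (Req_dec (norm X u) 0) as [H0|H0].
- apply norm_eq0 in H0. subst u. rewrite <- (rs_0 X (vzero X)), Klin_rs by auto.
  rewrite norm_rs, Rabs_R0. lra.
- assert (H : norm X (rs X (/ norm X u) u) <= 1).
  { rewrite norm_rs, Rabs_right. right. field. auto. apply Rle_ge, Rlt_le, Rinv_0_lt_compat. lra. }
  apply Hb in H. rewrite Klin_rs in H by auto. rewrite Rabs_right in H.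
  2: apply Rle_ge, Rlt_le, Rinv_0_lt_compat; lra.
  apply (Rmult_le_compat_l (norm X u)) in H; auto.
  replace (norm X u * (/ norm X u * Kabs k (g u))) with (Kabs k (g u)) in H by (field; auto). lra.
Qed.

Lemma build_T {k} (X Y : NormedSpace k) g c (y1 : Y) : Klin X g -> 0 < c ->
  is_lub (fun r => exists u : X, norm X u <= 1 /\ r = Kabs k (g u)) c ->
  norm Y y1 = 1 ->
  let T := fun u => vscale Y (Kmul k (KofR k (/ c)) (g u)) y1 in
  is_bounded_linear X Y T /\ opnorm_eq X Y T 1 /\ forall u, norm Y (T u) = / c * Kabs k (g u).
Proof.
intros Hg Hc [Hub Hlub] Hy1 T.
assert (HT : forall u, norm Y (T u) = / c * Kabs k (g u)).
{ intros u. unfold T. rewrite norm_scale, Kabs_mul, Kabs_KofR, Hy1.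
  rewrite Rabs_right. ring. apply Rle_ge, Rlt_le, Rinv_0_lt_compat; lra. }
assert (Hb1 : forall u, norm X u <= 1 -> Kabs k (g u) <= c).
{ intros u Hu. apply Hub. exists u. auto. }
destruct Hg as [ga gs].
split; [split; [split|]|split; [split|]].
- intros u v. unfold T. rewrite ga, Kmul_addr. apply vscale_adds.
- intros a u. unfold T. rewrite gs, vscale_assoc. f_equal.
  rewrite !Kmul_assoc. f_equal. apply Kmul_comm.
- exists 1. intros u. rewrite HT. pose proof (bound_all X g c (conj ga gs) Hc Hb1 u).
  apply (Rmult_le_compat_l (/ c)) in H. replace (/ c * (c * norm X u)) with (norm X u) in H by (field; lra). lra.
  apply Rlt_le, Rinv_0_lt_compat; lra.
- intros r (u & Hu & ->). rewrite HT. apply Hb1 in Hu.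
  apply (Rmult_le_compat_l (/ c)) in Hu. replace (/ c * c) with 1 in Hu by (field; lra). exact Hu.
  apply Rlt_le, Rinv_0_lt_compat; lra.
- intros b Hb. 
  assert (H : c <= c * b).
  { apply Hlub. intros r (u & Hu & ->). 
    assert (H1 : / c * Kabs k (g u) <= b) by (apply Hb; exists u; split; auto; rewrite HT; reflexivity).
    apply (Rmult_le_compat_l c) in H1; [|lra].
    replace (c * (/ c * Kabs k (g u))) with (Kabs k (g u)) in H1 by (field; lra). exact H1. }
  nra.
- exact HT.
Qed.

Lemma Kre_abs k a : Rabs (Cre (toC k a)) <= Kabs k a.
Proof. rewrite Kabs_n2. apply n2_absre. Qed.

Theorem mainTheorem7 (k : Kind) (X : BanachSpace k) :
  (exists Y : BanachSpace k, (exists y : Y, y <> vzero Y) /\ uniform_sBPBp X Y) ->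
  uniformly_convex X.
Proof.
intros (Y & (y0 & Hy0) & HP) eps Heps.
set (e1 := Rmin eps 2).
assert (He1 : 0 < e1) by (unfold e1; apply Rmin_glb_lt; lra).
assert (He1e : e1 <= eps) by apply Rmin_l.
assert (He12 : e1 <= 2) by apply Rmin_r.
destruct (HP (e1 / 8)) as (eta0 & Heta0 & HPT); [lra|].
set (eta1 := Rmin eta0 (e1 * e1 / 128)).
assert (Heta1 : 0 < eta1) by (unfold eta1; apply Rmin_glb_lt; nra).
assert (Heta10 : eta1 <= eta0) by apply Rmin_l.
assert (Heta1e : eta1 <= e1 * e1 / 128) by apply Rmin_r.
set (t := eta1 / 4).
assert (Ht : 0 < t) by (unfold t; lra).
set (del := t * e1 / 8).
assert (Hdel : 0 < del) by (unfold del; nra).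
exists del. split; [exact Hdel|].
intros x y Hx Hy Hxy.
apply Rnot_lt_le. intro Hcon.
destruct (K_HB X (vadd X x y)) as (f & fa & fs & fb & fz).
destruct (K_HB X (vsub X x y)) as (h & ha & hs & hb & hz).
assert (Hf : Klin X f) by (split; auto).
assert (Hh : Klin X h) by (split; auto).
set (g := fun u => Kadd k (f u) (Kmul k (KofR k t) (h u))).
assert (Hg : Klin X g) by (apply Klin_comb; auto).
assert (Reg : forall u, Cre (toC k (g u)) = Cre (toC k (f u)) + t * Cre (toC k (h u))).
{ intros u. unfold g. rewrite Cre_add, Cre_mulR. reflexivity. }
assert (Img : forall u, Cim (toC k (g u)) = Cim (toC k (f u)) + t * Cim (toC k (h u))).
{ intros u. unfold g. rewrite Cim_add, Cim_mulR. reflexivity. }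
assert (Hfxy : Cre (toC k (f x)) + Cre (toC k (f y)) > 2 - 2 * del).
{ rewrite <- (Klin_add_re X f x y Hf), fz. lra. }
assert (Hfx1 : Cre (toC k (f x)) <= 1).
{ pose proof (Kre_le_abs k (f x)). pose proof (fb x). lra. }
assert (Hfy1 : Cre (toC k (f y)) <= 1).
{ pose proof (Kre_le_abs k (f y)). pose proof (fb y). lra. }
assert (Hhxy : Cre (toC k (h x)) = Cre (toC k (h y)) + norm X (vsub X x y)).
{ pose proof (Klin_sub_re X h x y Hh). rewrite hz in H. lra. }
assert (Hhy : -1 <= Cre (toC k (h y))).
{ pose proof (Kre_abs k (h y)). pose proof (fb y). pose proof (hb y).
  pose proof (Rabs_pos (Cre (toC k (h y)))). pose proof (Rle_abs (- Cre (toC k (h y)))). rewrite Rabs_Ropp in H3. lra. }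
assert (Hgb : forall u, Kabs k (g u) <= (1 + t) * norm X u).
{ intros u. unfold g. eapply Rle_trans; [apply Kabs_tri|].
  rewrite Kabs_mul, Kabs_KofR, Rabs_right by lra.
  pose proof (fb u). pose proof (hb u). nra. }
set (S := fun r => exists u : X, norm X u <= 1 /\ r = Kabs k (g u)).
assert (HSb : bound S).
{ exists (1 + t). intros r (u & Hu & ->). pose proof (Hgb u). nra. }
assert (HSn : exists r, S r) by (exists (Kabs k (g x)); exists x; split; [lra|reflexivity]).
destruct (completeness S HSb HSn) as [c Hc].
assert (Hc1 : c <= 1 + t).
{ apply (proj2 Hc). intros r (u & Hu & ->). pose proof (Hgb u). nra. }
assert (Hin : forall u, norm X u <= 1 -> Kabs k (g u) <= c).
{ intros u Hu. apply (proj1 Hc). exists u. auto. }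
assert (Hcx : Cre (toC k (g x)) <= c).
{ pose proof (Kre_le_abs k (g x)). pose proof (Hin x). lra. }
assert (Hgy : 1 - 2 * del - t <= Cre (toC k (g y))).
{ rewrite Reg. assert (t * -1 <= t * Cre (toC k (h y))) by (apply Rmult_le_compat_l; lra). lra. }
assert (Hcy : Cre (toC k (g y)) <= c).
{ pose proof (Kre_le_abs k (g y)). pose proof (Hin y). lra. }
assert (Hdel4 : del <= t / 4) by (unfold del; nra).
assert (Ht1 : t <= 1 / 100).
{ assert (e1 * e1 <= 4) by nra. unfold t. lra. }
assert (Hcpos : 0 < c) by lra.
assert (Hny0 : 0 < norm Y y0).
{ pose proof (norm_ge0 Y y0). destruct (Req_dec (norm Y y0) 0) as [H0|H0].
  - apply norm_eq0 in H0. contradiction.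
  - lra. }
set (y1 := rs Y (/ norm Y y0) y0).
assert (Hy1 : norm Y y1 = 1).
{ unfold y1. rewrite norm_rs, Rabs_right. field. lra. apply Rle_ge, Rlt_le, Rinv_0_lt_compat; lra. }
destruct (build_T X Y g c y1 Hg Hcpos Hc Hy1) as (HTbl & HTop & HTn).
set (T := fun u => vscale Y (Kmul k (KofR k (/ c)) (g u)) y1) in *.
assert (Hgyc : c * (1 - eta1) < Cre (toC k (g y))).
{ assert ((1 + t) * (1 - eta1) < 1 - 2 * del - t) by (unfold t in *; nra). nra. }
destruct (HPT T y HTbl HTop Hy) as (w & Hw & HTw & Hwy).
{ unfold T; cbv beta; rewrite HTn. pose proof (Kre_le_abs k (g y)).
  assert (/ c * Cre (toC k (g y)) > 1 - eta1).
  { apply (Rmult_lt_compat_l (/ c)) in Hgyc. replace (/ c * (c * (1 - eta1))) with (1 - eta1) in Hgyc by (field; lra). lra.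
    apply Rinv_0_lt_compat; lra. }
  assert (/ c * Cre (toC k (g y)) <= / c * Kabs k (g y)).
  { apply Rmult_le_compat_l; [apply Rlt_le, Rinv_0_lt_compat; lra|auto]. }
  lra. }
unfold T in HTw; cbv beta in HTw; rewrite HTn in HTw.
assert (Hgw : Kabs k (g w) = c).
{ apply (Rmult_eq_compat_l c) in HTw. replace (c * (/ c * Kabs k (g w))) with (Kabs k (g w)) in HTw by (field; lra). lra. }
set (d := norm X (vsub X w y)).
pose proof (key_scalar (Cre (toC k (f w))) (Cim (toC k (f w))) (Cre (toC k (h w))) (Cim (toC k (h w)))
  (Cre (toC k (g y))) (Cim (toC k (g y))) (Cre (toC k (h y))) (Cim (toC k (h y)))
  c t d (e1 / 8) eta1 Hcpos Ht) as Hkey.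
assert (Hnorm_gwy : Kabs k (g (vsub X w y)) <= c * d).
{ apply (bound_all X g c Hg Hcpos Hin). }
rewrite Kabs_n2, (Klin_sub_re X g w y Hg), (Klin_sub_im X g w y Hg), Reg, Img in Hnorm_gwy.
assert (Hnorm_hwy : Kabs k (h (vsub X w y)) <= d) by apply hb.
rewrite Kabs_n2, (Klin_sub_re X h w y Hh), (Klin_sub_im X h w y Hh) in Hnorm_hwy.
rewrite Kabs_n2, Reg, Img in Hgw.
assert (Hfw : n2 (Cre (toC k (f w))) (Cim (toC k (f w))) <= 1) by (rewrite <- Kabs_n2, <- Hw; apply fb).
assert (Hhw : n2 (Cre (toC k (h w))) (Cim (toC k (h w))) <= 1) by (rewrite <- Kabs_n2, <- Hw; apply hb).
assert (Hgyn : n2 (Cre (toC k (g y))) (Cim (toC k (g y))) <= c) by (rewrite <- Kabs_n2; apply Hin; lra).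
specialize (Hkey ltac:(lra) Hfw Hhw Hgw Hnorm_gwy Hgyn ltac:(lra) ltac:(nra) Hnorm_hwy).
assert (Hd : d < e1 / 8) by exact Hwy.
assert (Hcx2 : 1 - 2 * del + t * (Cre (toC k (h y)) + norm X (vsub X x y)) <= c).
{ rewrite Reg, Hhxy in Hcx. nra. }
assert (He : e1 <= norm X (vsub X x y)) by lra.
assert (t * d < t * (e1 / 8)) by (apply Rmult_lt_compat_l; auto).
assert (t * e1 <= t * norm X (vsub X x y)) by (apply Rmult_le_compat_l; lra).
unfold del in *. nra.
Qed.
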